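(* Let $\{A_i\}_{i\in I}$ be a finite set of ReCiPe agents with discrete-system representation $\langle\mathcal{V},\rho,\theta\rangle$ and let $\mathcal{T}=\|_{i\in I}\mathcal{T}(A_i)$. Then the system traces $s_0m_0s_1m_1\dots$ with $\theta(s_0)$ are exactly the paths $s_0,a_0,s_1,a_1,\dots$ of $\mathcal{T}$ all of whose labels are send labels, under the identification of the observation $m_t=\langle ch_t,{\bf d}_t,k,\pi_t\rangle$ with the label $a_t=({\bf d}_t,k,\pi_t,!,ch_t)$.
   Context: Fix a set $CV$ of common variables, a set $D$ of data variables, and a set $Ch$ of channels containing the broadcast channel $\star$; variables range over finite domains. A ReCiPe agent is $A_i=\langle V_i,f_i,g^i_s,g^i_r,\mathcal{T}^i_s,\mathcal{T}^i_r,\theta_i\rangle$: $V_i$ finite set of local variables (local state $s_i$ = assignment to $V_i$); $f_i:CV\to V_i$ renaming, also the assertion $\bigwedge_{cv}cv=f_i(cv)$; send guard $g^i_s(V_i,Ch,D,CV)$; receive guard $g^i_r(V_i,Ch)$ with $g^i_r(V_i,\star)=\mathsf{true}$; send/receive transition assertions $\mathcal{T}^i_s,\mathcal{T}^i_r$ over $(V_i,V_i',D,Ch)$ with $\forall v,{\bf d}\,\exists v'.\,\mathcal{T}^i_r(v,v',{\bf d},\star)$; initial assertion $\theta_i$. Predicates over $CV$ are identified with sets of assignments; $\pi(f_i^{-1}(s_i))$ means the assignment $cv\mapsto s_i(f_i(cv))$ satisfies $\pi$. CTS semantics $\mathcal{T}(A_i)$: states = local states, initial states those satisfying $\theta_i$,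 $\mathsf{ls}(s)=\{c:g^i_r(s,c)\}$, transitions $(s,({\bf d},i,\pi,!,c),s')$ iff $\mathcal{T}^i_s(s,s',{\bf d},c)$ and $\pi=g^i_s(s,c,{\bf d})$, and $(s,({\bf d},i',\pi,?,c),s')$ iff $\mathcal{T}^i_r(s,s',{\bf d},c)$, $i'\neq i$, $c\in\mathsf{ls}(s)$ and $\pi(f_i^{-1}(s))$. Parallel composition of CTSs: product states and initial states, union of listening sets, and transitions: a send $(\upsilon,!,c)$ by one component combined with either a receive $(\upsilon,?,c)$ of the other or, if the other does not listen to $c$, the other staying put; two receives combine, or a receive combines with a non-listening component staying put; on $\star$, a send or receive by one component combines with the other staying put when the other has no $(\upsilon,?,\star)$ transition. A path of a CTS is an infinite sequence $s_0,a_0,s_1,a_1,\dots$ with $s_0$ initial and each $(s_j,a_j,s_{j+1})$ a transition. Discrete representation: $\mathcal{V}=\bigcup_iV_i$, $\theta=\bigwedge_i\theta_i$. A system trace is an infinite sequence $s_0m_0s_1m_1\dots$ of global states and observations such that for all $t$: $m_t=\langle ch_t,{\bf d}_t,k,\pi_t\rangle$, $\pi_t=g^k_s(s^k_t,{\bf d}_t,ch_t)$, and $(s_t,s_{t+1})$ satisfies $\mathcal{T}^k_s(s^k_t,s^k_{t+1},{\bf d}_t,ch_t)\wedge\bigwedge_{j\neq k}\exists CV.\,f_j\wedge[(g^j_r(s^j_t,ch_t)\wedge\mathcal{T}^j_r(s^j_t,s^j_{t+1},{\bf d}_t,ch_t)\wedge\pi_t)\vee(\neg g^j_r(s^j_t,ch_t)\wedge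 s^j_t=s^j_{t+1})\vee(ch_t=\star\wedge\neg\pi_t\wedge s^j_t=s^j_{t+1})]$, where $s^j_t$ is the projection of $s_t$ to $V_j$. *)

(* Defs.v *)
From mathcomp Require Import all_boot.
Set Implicit Arguments. Unset Strict Implicit. Unset Printing Implicit Defensive.

Inductive dir := Snd | Rcv.

(* A ReCiPe agent over common variables CV, data variables D, channels Ch
   (with broadcast channel [star]) and values Val. *)
Record agent (CV D Ch Val : finType) (star : Ch) := Agent {
  aV : finType;
  af : CV -> aV;
  (* send guard g_s(s, c, d) : a predicate over CV *)
  ags : (aV -> Val) -> Ch -> (D -> Val) -> ((CV -> Val) -> Prop);
  (* receive guard g_r(s, c) *)
  agr : (aV -> Val) -> Ch -> Prop;
  (* send / receive transition assertions T(s, s', d, c) *)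
  aTs : (aV -> Val) -> (aV -> Val) -> (D -> Val) -> Ch -> Prop;
  aTr : (aV -> Val) -> (aV -> Val) -> (D -> Val) -> Ch -> Prop;
  atheta : (aV -> Val) -> Prop;
  agr_star : forall s, agr s star;
  aTr_star : forall v d, exists v', aTr v v' d star }.
Arguments agent : clear implicits.
Arguments aV {CV D Ch Val star} a.
Arguments af {CV D Ch Val star} a _.
Arguments ags {CV D Ch Val star} a _ _ _ _.
Arguments agr {CV D Ch Val star} a _ _.
Arguments aTs {CV D Ch Val star} a _ _ _ _.
Arguments aTr {CV D Ch Val star} a _ _ _ _.
Arguments atheta {CV D Ch Val star} a _.

Record cts (Ch U : Type) := CTS {
  St : Type;
  init : St -> Prop;
  ls : St -> Ch -> Prop;
  tr : St -> U * dir * Ch -> St -> Prop }.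
Arguments St {Ch U} c.
Arguments init {Ch U} c _.
Arguments ls {Ch U} c _ _.
Arguments tr {Ch U} c _ _ _.

Definition lab_u (CV D Val I : Type) : Type := ((D -> Val) * I * ((CV -> Val) -> Prop))%type.

Definition agent_cts (CV D Ch Val : finType) (star : Ch) (I : Type)
  (A : I -> agent CV D Ch Val star) (i : I) : cts Ch (lab_u CV D Val I) :=
  @CTS Ch (lab_u CV D Val I) (aV (A i) -> Val)
    (fun s => atheta (A i) s)
    (fun s c => agr (A i) s c)
    (fun s a s' =>
       let: (u, g, c) := a in
       let: (d, i', pi) := u in
       match g with
       | Snd => i' = i /\ aTs (A i) s s' d c /\ pi = ags (A i) s c d
       | Rcv => aTr (A i) s s' d c /\ i' <> i /\ agr (A i) s c
                /\ pi (fun cv => s (af (A i) cv))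
       end).

Definition par (Ch U : Type) (star : Ch) (T1 T2 : cts Ch U) : cts Ch U :=
  @CTS Ch U (St T1 * St T2)%type
    (fun s => init T1 s.1 /\ init T2 s.2)
    (fun s c => ls T1 s.1 c \/ ls T2 s.2 c)
    (fun s a s' =>
       let: (u, g, c) := a in
       (g = Snd /\
          ((tr T1 s.1 (u, Snd, c) s'.1 /\ tr T2 s.2 (u, Rcv, c) s'.2) \/
           (tr T1 s.1 (u, Rcv, c) s'.1 /\ tr T2 s.2 (u, Snd, c) s'.2)))
    \/ (g = Snd /\
          ((tr T1 s.1 (u, Snd, c) s'.1 /\ ~ ls T2 s.2 c /\ s'.2 = s.2) \/
           (tr T2 s.2 (u, Snd, c) s'.2 /\ ~ ls T1 s.1 c /\ s'.1 = s.1)))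
    \/ (g = Rcv /\ tr T1 s.1 (u, Rcv, c) s'.1 /\ tr T2 s.2 (u, Rcv, c) s'.2)
    \/ (g = Rcv /\
          ((tr T1 s.1 (u, Rcv, c) s'.1 /\ ~ ls T2 s.2 c /\ s'.2 = s.2) \/
           (tr T2 s.2 (u, Rcv, c) s'.2 /\ ~ ls T1 s.1 c /\ s'.1 = s.1)))
    \/ (c = star /\
          ((tr T1 s.1 (u, g, c) s'.1 /\ (forall x, ~ tr T2 s.2 (u, Rcv, star) x)
              /\ s'.2 = s.2) \/
           (tr T2 s.2 (u, g, c) s'.2 /\ (forall x, ~ tr T1 s.1 (u, Rcv, star) x)
              /\ s'.1 = s.1)))).

Definition unit_cts (Ch U : Type) : cts Ch U :=
  @CTS Ch U unit (fun _ => True) (fun _ _ => False) (fun _ _ _ => False).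

Fixpoint comp_list (CV D Ch Val : finType) (star : Ch) (I : Type)
  (A : I -> agent CV D Ch Val star) (l : seq I) : cts Ch (lab_u CV D Val I) :=
  match l with
  | [::] => unit_cts Ch (lab_u CV D Val I)
  | i :: l' => par star (agent_cts A i) (comp_list A l')
  end.

Definition system (CV D Ch Val : finType) (star : Ch) (I : finType)
  (A : I -> agent CV D Ch Val star) : cts Ch (lab_u CV D Val I) :=
  comp_list A (enum I).

Definition is_path (Ch U : Type) (T : cts Ch U) (s : nat -> St T) (a : nat -> U * dir * Ch) :=
  init T (s 0) /\ forall t, tr T (s t) (a t) (s t.+1).

Definition gstate (CV D Ch Val : finType) (star : Ch) (I : Type)
  (A : I -> agent CV D Ch Val star) : Type := forall i, aV (A i) -> Val.

Definition gtheta (CV D Ch Val : finType) (star : Ch) (I : Type)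
  (A : I -> agent CV D Ch Val star) (g : gstate A) : Prop :=
  forall i, atheta (A i) (g i).

Fixpoint proj_list (CV D Ch Val : finType) (star : Ch) (I : Type)
  (A : I -> agent CV D Ch Val star) (l : seq I) (g : gstate A) : St (comp_list A l) :=
  match l return St (comp_list A l) with
  | [::] => tt
  | i :: l' => (g i, proj_list l' g)
  end.

Definition proj_state (CV D Ch Val : finType) (star : Ch) (I : finType)
  (A : I -> agent CV D Ch Val star) (g : gstate A) : St (system A) :=
  proj_list (enum I) g.

Record obs (CV D Ch Val I : Type) := Obs {
  och : Ch; od : D -> Val; ok : I; opi : (CV -> Val) -> Prop }.

Definition obs_label (CV D Ch Val I : Type) (m : obs CV D Ch Val I)
  : lab_u CV D Val I * dir * Ch :=
  ((od m, ok m, opi m), Snd, och m).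

Definition sys_trace (CV D Ch Val : finType) (star : Ch) (I : Type)
  (A : I -> agent CV D Ch Val star)
  (s : nat -> gstate A) (m : nat -> obs CV D Ch Val I) : Prop :=
  forall t,
    let ch := och (m t) in let d := od (m t) in
    let k := ok (m t) in let pi := opi (m t) in
    pi = ags (A k) (s t k) ch d /\
    aTs (A k) (s t k) (s t.+1 k) d ch /\
    forall j, j <> k ->
      (agr (A j) (s t j) ch /\ aTr (A j) (s t j) (s t.+1 j) d ch
         /\ pi (fun cv => s t j (af (A j) cv)))
      \/ (~ agr (A j) (s t j) ch /\ s t.+1 j = s t j)
      \/ (ch = star /\ ~ pi (fun cv => s t j (af (A j) cv)) /\ s t.+1 j = s t j).

Arguments sys_trace {CV D Ch Val star I} A s m.
Arguments gtheta {CV D Ch Val star I} A g.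
Arguments proj_state {CV D Ch Val star I} A g.
Arguments is_path {Ch U} T s a.

(* Main.v *)
Require Import Defs.
From mathcomp Require Import all_boot.
From Stdlib Require Import Classical.

Definition Pj {CV D Ch Val : finType} {star : Ch} {I : finType}
  (A : I -> agent CV D Ch Val star) (j : I) (d : D -> Val) (pi : (CV -> Val) -> Prop)
  (c : Ch) (x x' : aV (A j) -> Val) : Prop :=
  (agr (A j) x c /\ aTr (A j) x x' d c /\ pi (fun cv => x (af (A j) cv)))
  \/ (~ agr (A j) x c /\ x' = x)
  \/ (c = star /\ ~ pi (fun cv => x (af (A j) cv)) /\ x' = x).

Definition RNS {Ch U : Type} (star : Ch) (T : cts Ch U) (u : U) (c : Ch) (x x' : St T) : Prop :=
  tr T x (u, Rcv, c) x' \/ (~ ls T x c /\ x' = x)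
  \/ (c = star /\ (forall y, ~ tr T x (u, Rcv, star) y) /\ x' = x).

Lemma par_rcv (Ch U : Type) (star : Ch) (T1 T2 : cts Ch U) u c x y :
  tr (par star T1 T2) x (u, Rcv, c) y ->
  (exists z, tr T1 x.1 (u, Rcv, c) z) \/ (exists z, tr T2 x.2 (u, Rcv, c) z).
Proof.
move=> /= [[//]|[[//]|[[_ [H _]]|[[_ [[H _]|[H _]]]|[_ [[H _]|[H _]]]]]]]; by eauto.
Qed.

Arguments par_rcv {Ch U star T1 T2 u c x y}.

Lemma par_rcv_lift (Ch U : Type) (star : Ch) (T1 T2 : cts Ch U) u x :
  (exists z, tr T1 x.1 (u, Rcv, star) z) \/ (exists z, tr T2 x.2 (u, Rcv, star) z) ->
  exists y, tr (par star T1 T2) x (u, Rcv, star) y.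
Proof.
case: x => x1 x2 /=.
have [[z1 H1]|N1] := classic (exists z, tr T1 x1 (u, Rcv, star) z);
have [[z2 H2]|N2] := classic (exists z, tr T2 x2 (u, Rcv, star) z).
- move=> _; exists (z1, z2); right; right; left; by split.
- move=> _; exists (z1, x2); right; right; right; right; split=> //; left; split=> //;
  split=> // w Hw; apply: N2; by exists w.
- move=> _; exists (x1, z2); right; right; right; right; split=> //; right; split=> //;
  split=> // w Hw; apply: N1; by exists w.
- by case.
Qed.

Lemma comp_rcv_ls (CV D Ch Val : finType) (star : Ch) (I : finType)
  (A : I -> agent CV D Ch Val star) (l : seq I) u c x y :
  tr (comp_list A l) x (u, Rcv, c) y -> ls (comp_list A l) x c.
Proof.
elim: l x y => [|j l IH] x y; first by [].
move=> H; have := @par_rcv _ _ star (agent_cts A j) (comp_list A l) u c x y H.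
case=> [[z Hz]|[z Hz]]; [left|right; exact: (IH _ z)].
move: Hz; case: u {H IH} => [[d k] pi] /= Hz; by case: Hz => _ [_ []].
Qed.

Lemma comp_snd_in (CV D Ch Val : finType) (star : Ch) (I : finType)
  (A : I -> agent CV D Ch Val star) (l : seq I) d k pi c x y :
  tr (comp_list A l) x ((d, k, pi), Snd, c) y -> k \in l.
Proof.
elim: l x y => [|j l IH] x y; first by [].
rewrite in_cons => H; apply/orP.
case: H => [[_ [[[H _] _]|[_ H]]]|[[_ [[[H _] _]|[H _]]]|[[E _]|[[E _]|[_ [[[H _] _]|[H _]]]]]]];
  first [by left; apply/eqP | by right; exact: IH H | discriminate].
Qed.

Definition rcv_ls_prop {Ch U : Type} (T : cts Ch U) :=
  forall x u c y, tr T x (u, Rcv, c) y -> ls T x c.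

Lemma agent_rcv_ls (CV D Ch Val : finType) (star : Ch) (I : finType)
  (A : I -> agent CV D Ch Val star) j : rcv_ls_prop (agent_cts A j).
Proof. move=> x [[d k] pi] c y /=; by case=> _ [_ []]. Qed.

Lemma comp_rcv_ls' (CV D Ch Val : finType) (star : Ch) (I : finType)
  (A : I -> agent CV D Ch Val star) l : rcv_ls_prop (comp_list A l).
Proof. move=> x u c y; exact: comp_rcv_ls. Qed.

Lemma par_RNS (Ch U : Type) (star : Ch) (T1 T2 : cts Ch U) u c x1 x2 x1' x2' :
  rcv_ls_prop T1 -> rcv_ls_prop T2 ->
  (RNS star T1 u c x1 x1' /\ RNS star T2 u c x2 x2' <->
   RNS star (par star T1 T2) u c (x1, x2) (x1', x2')).
Proof.
move=> L1 L2; split.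
- case=> [[R1|[[N1 E1]|[C1 [S1 E1]]]] [R2|[[N2 E2]|[C2 [S2 E2]]]]].
  + left; right; right; left; by split.
  + left; right; right; right; left; split=> //; left; by rewrite E2.
  + subst c; left; right; right; right; right; split=> //; left; by rewrite E2.
  + left; right; right; right; left; split=> //; right; by rewrite E1.
  + right; left; rewrite E1 E2; split=> //= -[]; by [apply: N1|apply: N2].
  + subst c x1' x2'; right; right; split=> //; split=> // y Hy.
    case: (par_rcv Hy) => [[z Hz]|[z Hz]]; [exact: N1 (L1 _ _ _ _ Hz)|exact: S2 Hz].
  + subst c; left; right; right; right; right; split=> //; right; by rewrite E1.
  + subst c x1' x2'; right; right; split=> //; split=> // y Hy.
    case: (par_rcv Hy) => [[z Hz]|[z Hz]]; [exact: S1 Hz|exact: N2 (L2 _ _ _ _ Hz)].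
  + subst c x1' x2'; right; right; split=> //; split=> // y Hy.
    case: (par_rcv Hy) => [[z Hz]|[z Hz]]; [exact: S1 Hz|exact: S2 Hz].
- case=> [H|[[N E]|[C [S E]]]].
  + case: H => [[E _]|[[E _]|[[_ [H1 H2]]|[[_ [[H1 [H2 E]]|[H2 [H1 E]]]]|[C [[H1 [H2 E]]|[H2 [H1 E]]]]]]]] //=.
    * by split; left.
    * simpl in E; subst; split; [left|right; left] => //.
    * simpl in E; subst; split; [right; left|left] => //.
    * simpl in E; subst; split; [left|right; right] => //.
    * simpl in E; subst; split; [right; right|left] => //.
  + case: E => -> ->; split; right; left; split=> //; move=> H; apply: N; by [left|right].
  + case: E => -> ->; subst c; split; right; right; split=> //; split=> // y Hy.
    * have [z Hz] := @par_rcv_lift _ _ star T1 T2 u (x1, x2) (or_introl (ex_intro _ y Hy)).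
      exact: S Hz.
    * have [z Hz] := @par_rcv_lift _ _ star T1 T2 u (x1, x2) (or_intror (ex_intro _ y Hy)).
      exact: S Hz.
Qed.

Lemma par_Snd (Ch U : Type) (star : Ch) (T1 T2 : cts Ch U) u c x1 x2 x1' x2' :
  (tr T1 x1 (u, Snd, c) x1' /\ RNS star T2 u c x2 x2') \/
  (RNS star T1 u c x1 x1' /\ tr T2 x2 (u, Snd, c) x2') <->
  tr (par star T1 T2) (x1, x2) (u, Snd, c) (x1', x2').
Proof.
split.
- case=> [[H1 [R2|[[N2 E2]|[C2 [S2 E2]]]]]|[[R1|[[N1 E1]|[C1 [S1 E1]]]] H2]].
  + left; split=> //; by left.
  + right; left; split=> //; left; by rewrite E2.
  + subst c; right; right; right; right; split=> //; left; by rewrite E2.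
  + left; split=> //; by right.
  + right; left; split=> //; right; by rewrite E1.
  + subst c; right; right; right; right; split=> //; right; by rewrite E1.
- case=> [[_ [[H1 H2]|[H1 H2]]]|[[_ [[H1 [N E]]|[H2 [N E]]]]|[[E _]|[[E _]|[C [[H1 [S E]]|[H2 [S E]]]]]]]] //; simpl in *.
  + by left; split=> //; left.
  + by right; split=> //; left.
  + by left; split=> //; right; left.
  + by right; split=> //; right; left.
  + by left; split=> //; right; right.
  + by right; split=> //; right; right.
Qed.

Lemma proj_ext (CV D Ch Val : finType) (star : Ch) (I : finType)
  (A : I -> agent CV D Ch Val star) (l : seq I) (g g' : gstate A) :
  (forall j, j \in l -> g j = g' j) -> proj_list l g = proj_list l g'.
Proof.
elim: l => [|j l IH] //= H; rewrite H ?mem_head // IH // => i Hi; apply: H.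
by rewrite in_cons Hi orbT.
Qed.

Lemma proj_inj (CV D Ch Val : finType) (star : Ch) (I : finType)
  (A : I -> agent CV D Ch Val star) (l : seq I) (g g' : gstate A) :
  proj_list l g = proj_list l g' -> forall j, j \in l -> g j = g' j.
Proof.
elim: l => [|j l IH] //= [E1 E2] i; rewrite in_cons; case/orP => [/eqP ->|] //.
exact: IH.
Qed.

Lemma agent_RNS (CV D Ch Val : finType) (star : Ch) (I : finType)
  (A : I -> agent CV D Ch Val star) j d k pi c x x' :
  k <> j -> (Pj A j d pi c x x' <-> RNS star (agent_cts A j) (d, k, pi) c x x').
Proof.
move=> nkj; rewrite /Pj /RNS /=; split.
- case=> [[G [T P]]|[[N E]|[C [NP E]]]].
  + by left.
  + by right; left.
  + subst c; right; right; split=> //; split=> // y [_ [_ [_ P]]]; exact: NP.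
- case=> [[T [_ [G P]]]|[[N E]|[C [S E]]]].
  + by left.
  + by right; left.
  + subst c; right; right; split=> //; split=> // P.
    have [y Hy] := aTr_star x d.
    apply: (S y); split=> //; split=> //; split=> //; exact: (agr_star (a := A j)).
Qed.

Lemma comp_RNS (CV D Ch Val : finType) (star : Ch) (I : finType)
  (A : I -> agent CV D Ch Val star) (l : seq I) d k pi c (g g' : gstate A) :
  k \notin l ->
  ((forall j, j \in l -> Pj A j d pi c (g j) (g' j)) <->
   RNS star (comp_list A l) (d, k, pi) c (proj_list l g) (proj_list l g')).
Proof.
elim: l => [|j l IH] Hk.
  split=> // _; right; left; by split.
rewrite in_cons negb_or in Hk; case/andP: Hk => /eqP Hkj Hk.
rewrite -(@par_RNS _ _ star (agent_cts A j) (comp_list A l) _ _ (g j) _ (g' j));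
  [|exact: agent_rcv_ls|exact: comp_rcv_ls'].
rewrite -(IH Hk) -agent_RNS //; split.
- move=> H; split; first by apply: H; rewrite mem_head.
  move=> i Hi; apply: H; by rewrite in_cons Hi orbT.
- case=> H1 H2 i; rewrite in_cons; case/orP => [/eqP ->|] //; exact: H2.
Qed.

Lemma comp_Snd (CV D Ch Val : finType) (star : Ch) (I : finType)
  (A : I -> agent CV D Ch Val star) (l : seq I) d k pi c (g g' : gstate A) :
  uniq l -> k \in l ->
  ((pi = ags (A k) (g k) c d /\ aTs (A k) (g k) (g' k) d c /\
    forall j, j \in l -> j <> k -> Pj A j d pi c (g j) (g' j)) <->
   tr (comp_list A l) (proj_list l g) ((d, k, pi), Snd, c) (proj_list l g')).
Proof.
elim: l => [|j l IH] //; rewrite [uniq _]/= => /andP [Hj Hu].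
rewrite -(@par_Snd _ _ star (agent_cts A j) (comp_list A l) _ _ (g j) _ (g' j)).
rewrite in_cons => Hk.
have [Ekj|Nkj] := eqVneq k j.
- subst k.
  rewrite -comp_RNS //; split.
  + case=> P [T H]; left; split; first by split.
    move=> i Hi; apply: H; first by rewrite in_cons Hi orbT.
    by move=> E; subst i; rewrite Hi in Hj.
  + case=> [[[_ [T P]] H]|[_ H]]; last by rewrite (@comp_snd_in _ _ _ _ _ _ A _ _ _ _ _ _ _ H) in Hj.
    split=> //; split=> // i; rewrite in_cons; case/orP => [/eqP ->|] //.
    by move=> Hi _; apply: H.
- have Hk' : k \in l by move: Hk; rewrite (negPf Nkj).
  rewrite -IH // -agent_RNS; last by apply/eqP.
  split.
  + case=> P [T H]; right; split.
      by apply: H; [rewrite mem_head|apply/eqP; rewrite eq_sym].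
    split=> //; split=> // i Hi; apply: H; by rewrite ?in_cons ?Hi ?orbT.
  + case=> [[[E _] _]|[H1 [P [T H2]]]]; first by move/eqP: Nkj.
    split=> //; split=> // i; rewrite in_cons; case/orP => [/eqP ->|] //.
    exact: H2.
Qed.

Lemma comp_init (CV D Ch Val : finType) (star : Ch) (I : finType)
  (A : I -> agent CV D Ch Val star) (l : seq I) (g : gstate A) :
  (forall j, j \in l -> atheta (A j) (g j)) <-> init (comp_list A l) (proj_list l g).
Proof.
elim: l => [|j l IH] //; split.
- move=> H; split; first by apply: H; rewrite mem_head.
  apply/IH => i Hi; apply: H; by rewrite in_cons Hi orbT.
- case=> H1 /IH H2 i; rewrite in_cons; case/orP => [/eqP ->|] //; exact: H2.
Qed.

Lemma comp_inhab (CV D Ch Val : finType) (star : Ch) (I : finType)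
  (A : I -> agent CV D Ch Val star) (l : seq I) (x : St (comp_list A l)) i :
  i \in l -> exists v : aV (A i) -> Val, True.
Proof.
elim: l x => [|j l IH] // [x1 x2]; rewrite in_cons; case/orP => [/eqP ->|Hi].
- by exists x1.
- exact: IH x2 Hi.
Qed.

Lemma comp_surj (CV D Ch Val : finType) (star : Ch) (I : finType)
  (A : I -> agent CV D Ch Val star) (l : seq I) (g0 : gstate A) :
  uniq l -> forall x : St (comp_list A l), exists g, proj_list l g = x.
Proof.
elim: l => [|j l IH] /=; first by move=> _ []; exists g0.
case/andP => Hj Hu [x1 x2]; have [g' Hg'] := IH Hu x2.
exists (@dfwith I (fun i => aV (A i) -> Val) g' j x1).
rewrite dfwith_in; congr pair; rewrite -Hg'; apply: proj_ext => i Hi.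
rewrite dfwith_out //; apply/eqP => E; subst i; by rewrite Hi in Hj.
Qed.

From Stdlib Require Import IndefiniteDescription.

Theorem mainTheorem4 (CV D Ch Val : finType) (star : Ch) (I : finType)
  (A : I -> agent CV D Ch Val star) :
  (forall (s : nat -> gstate A) (m : nat -> obs CV D Ch Val I),
      sys_trace A s m -> gtheta A (s 0) ->
      is_path (system A) (fun t => proj_state A (s t)) (fun t => obs_label (m t)))
  /\
  (forall (p : nat -> St (system A)) (a : nat -> lab_u CV D Val I * dir * Ch),
      is_path (system A) p a -> (forall t, (a t).1.2 = Snd) ->
      exists (s : nat -> gstate A) (m : nat -> obs CV D Ch Val I),
        sys_trace A s m /\ gtheta A (s 0) /\
        (forall t, p t = proj_state A (s t)) /\
        (forall t, a t = obs_label (m t))).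
Proof.
have memI (i : I) : i \in enum I by rewrite mem_enum.
split.
- move=> s m Hs H0; split.
  + rewrite /system /proj_state; apply/comp_init => j _; exact: H0 j.
  + move=> t; have [P [T H]] := Hs t.
    rewrite /obs_label /system /proj_state.
    apply/comp_Snd; [exact: enum_uniq|exact: memI|].
    split=> //; split=> // j _ njk; exact: H j njk.
- move=> p a [Hi Ht] Hsnd.
  have Hinh i : exists v : aV (A i) -> Val, True := @comp_inhab _ _ _ _ _ _ A _ (p 0) i (memI i).
  pose g0 : gstate A := fun i => proj1_sig (constructive_indefinite_description _ (Hinh i)).
  have Hs t : exists g, proj_list (enum I) g = p t := @comp_surj _ _ _ _ _ _ A _ g0 (enum_uniq I) (p t).
  pose s := fun t => proj1_sig (constructive_indefinite_description _ (Hs t)).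
  have Hp t : p t = proj_state A (s t).
    by rewrite /s /proj_state; case: (constructive_indefinite_description _ _).
  pose m := fun t => Obs (a t).2 (a t).1.1.1.1 (a t).1.1.1.2 (a t).1.1.2.
  have Ha t : a t = obs_label (m t).
    by rewrite /m /obs_label; case: (a t) (Hsnd t) => [[[[d k] pi] g] c] /= ->.
  exists s, m; split; [|split; [|split]] => //.
  + move=> t /=; have := Ht t; rewrite Hp Hp Ha /obs_label /system /proj_state.
    move/comp_Snd => H; have [P [T H']] := H (enum_uniq I) (memI _).
    split=> //; split=> // j njk; exact: H' j (memI j) njk.
  + have := Hi; rewrite Hp /system /proj_state => /comp_init H j; exact: H j (memI j).
Qed.
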